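(* Let $Q$ be a quadrilateral in $K^2$. The bisector locus of $Q$ is degenerate if and only if there is a pair $L,L'$ of parallel sides of $Q$ or the two diagonals $L,L'$ of $Q$ are parallel. In this case, the bisector locus of $Q$ is the union of the midline of $L$ and $L'$ and the line through the midpoints of $L$ and $L'$.
   Context: $K$ is a field of characteristic $\neq 2$, and we work in $K^2$ (inside the projective plane). Every line $L$ has an equation $tX-uY+v=0$ normalized so that $t=1$ if $u=0$ and $u=1$ if $u\neq 0$; the coefficients are denoted $t_L,u_L,v_L$. A quadrilateral $Q=ABA'B'$ consists of four distinct lines $A,B,A',B'$ (sides), not all through one point, with adjacent sides ($A,B$; $B,A'$; $A',B'$; $B',A$) not parallel; opposite sides ($A,A'$; $B,B'$) may be parallel. Vertices: $A\cap B$, $B\cap A'$, $A'\cap B'$, $B'\cap A$ (two may coincide if three sides are concurrent). Diagonals: the lines through nonadjacent vertices. The midpoint of a side or diagonal is the midpoint of the two vertices of $Q$ on it. The centroid $(h,k)$ is the midpoint of the midpoints of the diagonals (equivalently the average of the vertices). A diagonal point is the intersection of a pair of opposite sides or of the diagonals. The midline of two distinct parallel lines is the line formed by the midpoints of points of one with points of the other. Define $\alpha=t_Au_Bu_{A'}u_{B'}-u_At_Bu_{A'}u_{B'}+u_Au_Bt_{A'}u_{B'}-u_Au_Bu_{A'}t_{B'}$, $\beta=t_Au_Bt_{A'}u_{B'}-u_At_Bu_{A'}t_{B'}$, $\gamma=t_At_Bt_{A'}u_{B'}-t_At_Bu_{A'}t_{B'}+t_Au_Bt_{A'}t_{B'}-u_At_Bt_{A'}t_{B'}$,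 $\Phi_Q(X,Y)=\gamma X^2-2\beta XY+\alpha Y^2$. A line $\ell$ crosses a pair $\{\ell_1,\ell_2\}$ if it is distinct from both and not parallel to both; $\mathrm{mid}_{\{\ell_1,\ell_2\}}(\ell)$ is the midpoint of the points where $\ell$ meets $\ell_1,\ell_2$ (the point at infinity of $\ell$ if one of them is at infinity). $\ell$ bisects $Q$ if $\mathrm{mid}_{\mathsf P}(\ell)$ is the same for all pairs $\mathsf P$ among $\{A,A'\},\{B,B'\}$ that $\ell$ crosses; this common point is the midpoint of the bisector. The bisector locus of $Q$ is the set of midpoints of bisectors of $Q$; it is the zero set of the conic $\Phi_Q(X-h,Y-k)-\Phi_Q(a-h,b-k)$, where $(a,b)$ is any finite diagonal point of $Q$. A conic (quadratic polynomial) over $K$ is degenerate if it is a product of linear polynomials over the algebraic closure of $K$. *)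

(* Defs.v *)
From mathcomp Require Import all_boot all_order all_algebra.
Set Implicit Arguments. Unset Strict Implicit. Unset Printing Implicit Defensive.
Import Order.TTheory GRing.Theory Num.Theory.
Local Open Scope ring_scope.

Section Geometry.
Variable K : fieldType.

Definition point := (K * K)%type.

(* A line  t X - u Y + v = 0,  given by its coefficients (t,u,v). *)
Record line := Line { lt : K; lu : K; lv : K }.

Definition normalized (L : line) : bool :=
  if lu L == 0 then lt L == 1 else lu L == 1.

Definition on_line (L : line) (p : point) : bool :=
  lt L * p.1 - lu L * p.2 + lv L == 0.

(* Two lines are parallel iff their direction vectors (u,t) are proportional
   (this includes equal lines). *)
Definition parallel (L M : line) : bool := lt L * lu M == lu L * lt M.

(* Intersection point of two non-parallel lines (Cramer's rule). *)
Definition meet (L M : line) : point :=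
  let D := lu L * lt M - lt L * lu M in
  ((lv L * lu M - lu L * lv M) / D, (lt M * lv L - lt L * lv M) / D).

Definition midpoint (p q : point) : point :=
  ((p.1 + q.1) / 2%:R, (p.2 + q.2) / 2%:R).

Definition line_thru (p q : point) : line :=
  let d1 := q.1 - p.1 in let d2 := q.2 - p.2 in
  if d1 == 0 then Line 1 0 ((d1 * p.2 - d2 * p.1) / d2)
  else Line (d2 / d1) 1 ((d1 * p.2 - d2 * p.1) / d1).

Definition midline (L M : line) (m : point) : Prop :=
  exists p q, [/\ on_line L p, on_line M q & m = midpoint p q].

Record quad := Quad { qA : line; qB : line; qA' : line; qB' : line }.

Definition is_quadrilateral (Q : quad) : Prop :=
  let: Quad A B A' B' := Q in
  [/\ [&& normalized A, normalized B, normalized A' & normalized B'],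
      [/\ A <> B, A <> A', A <> B' & [/\ B <> A', B <> B' & A' <> B']],
      ~ (exists p, [&& on_line A p, on_line B p, on_line A' p & on_line B' p])
    & [&& ~~ parallel A B, ~~ parallel B A', ~~ parallel A' B'
        & ~~ parallel B' A]].

Definition vAB (Q : quad) := meet (qA Q) (qB Q).
Definition vBA' (Q : quad) := meet (qB Q) (qA' Q).
Definition vA'B' (Q : quad) := meet (qA' Q) (qB' Q).
Definition vB'A (Q : quad) := meet (qB' Q) (qA Q).

Definition diag1 (Q : quad) := line_thru (vAB Q) (vA'B' Q).
Definition diag2 (Q : quad) := line_thru (vBA' Q) (vB'A Q).

Definition midA (Q : quad) := midpoint (vAB Q) (vB'A Q).
Definition midB (Q : quad) := midpoint (vAB Q) (vBA' Q).
Definition midA' (Q : quad) := midpoint (vBA' Q) (vA'B' Q).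
Definition midB' (Q : quad) := midpoint (vA'B' Q) (vB'A Q).
Definition middiag1 (Q : quad) := midpoint (vAB Q) (vA'B' Q).
Definition middiag2 (Q : quad) := midpoint (vBA' Q) (vB'A Q).

Definition centroid (Q : quad) := midpoint (middiag1 Q) (middiag2 Q).

Definition finite_diag_point (Q : quad) (p : point) : Prop :=
  [\/ [&& ~~ parallel (qA Q) (qA' Q), on_line (qA Q) p & on_line (qA' Q) p],
      [&& ~~ parallel (qB Q) (qB' Q), on_line (qB Q) p & on_line (qB' Q) p]
    | [&& ~~ parallel (diag1 Q) (diag2 Q), on_line (diag1 Q) p
        & on_line (diag2 Q) p]].

Definition alpha (Q : quad) : K :=
  let: Quad A B A' B' := Q in
  lt A * lu B * lu A' * lu B' - lu A * lt B * lu A' * lu B'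
  + lu A * lu B * lt A' * lu B' - lu A * lu B * lu A' * lt B'.
Definition beta (Q : quad) : K :=
  let: Quad A B A' B' := Q in
  lt A * lu B * lt A' * lu B' - lu A * lt B * lu A' * lt B'.
Definition gamma (Q : quad) : K :=
  let: Quad A B A' B' := Q in
  lt A * lt B * lt A' * lu B' - lt A * lt B * lu A' * lt B'
  + lt A * lu B * lt A' * lt B' - lu A * lt B * lt A' * lt B'.

Definition PhiQ (Q : quad) (x y : K) : K :=
  gamma Q * x ^+ 2 - 2%:R * beta Q * x * y + alpha Q * y ^+ 2.

End Geometry.

(* Bivariate polynomials over a ring R, as {poly {poly R}}:
   the outer variable is X, the inner variable is Y. *)
Section Bivariate.
Variable R : comNzRingType.
Definition pX : {poly {poly R}} := 'X.
Definition pY : {poly {poly R}} := ('X)%:P.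
Definition pC (c : R) : {poly {poly R}} := (c%:P)%:P.
Definition eval2 (f : {poly {poly R}}) (x y : R) : R := (f.[x%:P]).[y].
Definition lin2 (a b c : R) : {poly {poly R}} := pC a * pX + pC b * pY + pC c.
End Bivariate.

Definition bisector_conic (K : fieldType) (Q : quad K) (ab : point K)
  : {poly {poly K}} :=
  let h := (centroid Q).1 in let k := (centroid Q).2 in
  pC (gamma Q) * (pX K - pC h) ^+ 2
  - pC (2%:R * beta Q) * (pX K - pC h) * (pY K - pC k)
  + pC (alpha Q) * (pY K - pC k) ^+ 2
  - pC (PhiQ Q (ab.1 - h) (ab.2 - k)).

Definition bisector_locus (K : fieldType) (Q : quad K) (ab : point K)
  (p : point K) : Prop :=
  eval2 (bisector_conic Q ab) p.1 p.2 = 0.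

Definition is_alg_closure (K : fieldType) (L : closedFieldType)
  (iota : {rmorphism K -> L}) : Prop :=
  forall x : L, exists2 p : {poly K}, p != 0 & root (map_poly iota p) x.

Definition degenerate (K : fieldType) (L : closedFieldType)
  (iota : {rmorphism K -> L}) (f : {poly {poly K}}) : Prop :=
  exists a1 b1 c1 a2 b2 c2 : L,
    [/\ a1 != 0 \/ b1 != 0, a2 != 0 \/ b2 != 0
      & map_poly (map_poly iota) f = lin2 a1 b1 c1 * lin2 a2 b2 c2].

(* Main.v *)
Require Import Defs.
From mathcomp Require Import all_boot all_order all_algebra.
From mathcomp Require Import ring.
Import GRing.Theory.
Set Implicit Arguments. Unset Strict Implicit.
Local Open Scope ring_scope.

Ltac nz := repeat (apply/andP; split); try assumption; try done.

Section Gen.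
Variable K : fieldType.
Implicit Types (p q r : point K).

Definition cr (p q : K * K) : K := p.1 * q.2 - p.2 * q.1.
Definition Phi3 (g b a x y : K) : K := g * x ^+ 2 - 2%:R * b * x * y + a * y ^+ 2.

Lemma GL (g b a : K) (w1 w2 : K * K) :
  (2%:R : K) != 0 -> b ^+ 2 - a * g != 0 ->
  Phi3 g b a w1.1 w1.2 = 0 -> Phi3 g b a w2.1 w2.2 = 0 -> cr w1 w2 != 0 ->
  exists k, k != 0 /\ forall x y, Phi3 g b a x y = k * cr w1 (x, y) * cr w2 (x, y).
Proof.
move=> h2 hd h1 h2' hc.
set B := g * w1.1 * w2.1 - b * (w1.1 * w2.2 + w1.2 * w2.1) + a * w1.2 * w2.2.
have key : forall x y, cr w1 w2 ^+ 2 * Phi3 g b a x y =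
   Phi3 g b a w1.1 w1.2 * cr (x, y) w2 ^+ 2 + 2%:R * B * cr (x, y) w2 * cr w1 (x, y)
   + Phi3 g b a w2.1 w2.2 * cr w1 (x, y) ^+ 2.
  by move=> x y; rewrite /Phi3 /cr /B /=; ring.
have hB : B != 0.
  apply/negP => /eqP hB0.
  have z : forall x y, Phi3 g b a x y = 0.
    move=> x y; have := key x y; rewrite h1 h2' hB0.
    move/eqP; rewrite !(mul0r, mulr0, add0r, addr0) mulf_eq0 expf_eq0 /=.
    by rewrite (negbTE hc) /= => /eqP.
  have zg := z 1 0; have za := z 0 1; have zb := z 1 1.
  move: zg za zb; rewrite /Phi3 => zg za zb.
  have eg : g = 0 by rewrite -zg; ring.
  have ea : a = 0 by rewrite -za; ring.
  have eb : 2%:R * b = 0 by rewrite -[RHS]oppr0 -zb eg ea; ring.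
  move: eb => /eqP; rewrite mulf_eq0 (negbTE h2) /= => /eqP eb.
  by move: hd; rewrite eb ea; rewrite expr0n /= mul0r subr0 eqxx.
exists (- (2%:R * B) / cr w1 w2 ^+ 2); split.
  by rewrite mulf_neq0 // ?oppr_eq0 ?mulf_neq0 // invr_eq0 expf_neq0.
move=> x y.
have e := key x y; rewrite h1 h2' in e.
apply: (mulfI (expf_neq0 2 hc)); rewrite e /cr /=.
field; exact: hc.
Qed.

Lemma npar_nz (L M : line K) : ~~ parallel L M -> lu L * lt M - lt L * lu M != 0.
Proof.
rewrite /parallel => h; apply: contra h; rewrite subr_eq0 => /eqP ->; by [].
Qed.

Lemma meet_on (L M : line K) : ~~ parallel L M ->
  on_line L (meet L M) /\ on_line M (meet L M).
Proof.
move=> /npar_nz; case: L => tL uL vL; case: M => tM uM vM /= hD.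
rewrite /on_line /meet /=; split; apply/eqP; field; exact: hD.
Qed.

Lemma meet_uniq (L M : line K) p : ~~ parallel L M ->
  on_line L p -> on_line M p -> p = meet L M.
Proof.
move=> /npar_nz; case: L => tL uL vL; case: M => tM uM vM /= hD.
case: p => x y; rewrite /on_line /meet /= => /eqP e1 /eqP e2.
congr (_, _); apply/eqP; rewrite -subr_eq0.
  have -> : x - (vL * uM - uL * vM) / (uL * tM - tL * uM) =
     (uL * (tM * x - uM * y + vM) - uM * (tL * x - uL * y + vL)) / (uL * tM - tL * uM).
    by field.
  by rewrite e1 e2 !mulr0 subr0 mul0r.
have -> : y - (tM * vL - tL * vM) / (uL * tM - tL * uM) =
   (tL * (tM * x - uM * y + vM) - tM * (tL * x - uL * y + vL)) / (uL * tM - tL * uM).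
  by field.
by rewrite e1 e2 !mulr0 subr0 mul0r.
Qed.

Lemma norm_par (L M : line K) : normalized L -> normalized M -> parallel L M ->
  lt L = lt M /\ lu L = lu M.
Proof.
case: L => tL uL vL; case: M => tM uM vM; rewrite /normalized /parallel /=.
have [->|huL] := eqVneq uL 0 => /eqP hL;
have [->|huM] := eqVneq uM 0 => /eqP hM.
- by rewrite hL hM.
- by rewrite hL hM => /eqP h; move: h; rewrite ?mul0r ?mulr0 ?mul1r ?mulr1 => /eqP; rewrite ?oner_eq0 // eq_sym oner_eq0.
- by rewrite hL hM => /eqP h; move: h; rewrite ?mul0r ?mulr0 ?mul1r ?mulr1 => /eqP; rewrite ?oner_eq0 // eq_sym oner_eq0.
- by rewrite hL hM mulr1 mul1r => /eqP ->.
Qed.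

Lemma norm_nz (L : line K) : normalized L -> (lt L != 0) || (lu L != 0).
Proof.
case: L => t u v; rewrite /normalized /=.
have [_|hu] := eqVneq u 0; first by move=> /eqP ->; rewrite oner_eq0.
by rewrite orbT.
Qed.

Lemma par_eq (L M : line K) p : normalized L -> normalized M -> parallel L M ->
  on_line L p -> on_line M p -> L = M.
Proof.
move=> nL nM pLM; have [et eu] := norm_par nL nM pLM.
clear nL nM pLM.
case: L et eu => tL uL vL; case: M => tM uM vM /= -> -> .
rewrite /on_line /= => /eqP e1 /eqP e2; congr Line.
apply/eqP; rewrite -subr_eq0.
have -> : vL - vM = (tM * p.1 - uM * p.2 + vL) - (tM * p.1 - uM * p.2 + vM) by ring.
by rewrite e1 e2 subr0.
Qed.

Lemma thru_norm (p q : point K) : normalized (line_thru p q).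
Proof.
rewrite /line_thru; case: eqP => _; rewrite /normalized /= ?eqxx // oner_eq0 //.
Qed.

Lemma thru_coef (p q : point K) : p != q ->
  exists s, s != 0 /\ [/\ lt (line_thru p q) = s * (q.2 - p.2),
     lu (line_thru p q) = s * (q.1 - p.1) &
     lv (line_thru p q) = s * ((q.1 - p.1) * p.2 - (q.2 - p.2) * p.1)].
Proof.
case: p => p1 p2; case: q => q1 q2 /= hpq; rewrite /line_thru /=.
have [h1|h1] := eqVneq (q1 - p1) 0.
  have h2 : q2 - p2 != 0.
    apply: contra hpq => /eqP h2; apply/eqP; congr (_, _); apply/eqP;
      by rewrite eq_sym -subr_eq0 ?h1 ?h2.
  exists (q2 - p2)^-1; split; first by rewrite invr_eq0.
  by split => //=; rewrite ?h1; field.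
exists (q1 - p1)^-1; split; first by rewrite invr_eq0.
by split => //=; field.
Qed.

Lemma on_thru (p q r : point K) : p != q ->
  on_line (line_thru p q) r = ((q.1 - p.1) * (r.2 - p.2) - (q.2 - p.2) * (r.1 - p.1) == 0).
Proof.
move=> /thru_coef [s [hs [e1 e2 e3]]]; rewrite /on_line e1 e2 e3.
have -> : s * (q.2 - p.2) * r.1 - s * (q.1 - p.1) * r.2 + s * ((q.1 - p.1) * p.2 - (q.2 - p.2) * p.1)
  = - s * ((q.1 - p.1) * (r.2 - p.2) - (q.2 - p.2) * (r.1 - p.1)) by ring.
by rewrite mulf_eq0 oppr_eq0 (negbTE hs).
Qed.

Lemma midline_iff (M N : line K) m : (2%:R : K) != 0 ->
  normalized M -> normalized N -> parallel M N ->
  midline M N m <-> lt M * m.1 - lu M * m.2 + (lv M + lv N) / 2%:R = 0.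
Proof.
move=> h2 nM nN pMN; have [et eu] := norm_par nM nN pMN.
have := norm_nz nM.
clear nM nN pMN.
case: M et eu => t u vM; case: N => tN uN vN /= <- <- htu.
rewrite /midline /on_line /midpoint /=; split.
  move=> [[p1 p2] [[q1 q2] [/eqP e1 /eqP e2 ->]]] /=.
  rewrite -[RHS](_ : (t * p1 - u * p2 + vM + (t * q1 - u * q2 + vN)) / 2%:R = 0).
    by field; nz.
  by rewrite e1 e2 addr0 mul0r.
move=> e.
case: m e => m1 m2 /= e.
have [hu|hu] := eqVneq u 0.
  have ht : t != 0 by move: htu; rewrite hu eqxx orbF.
  have e' : t * m1 = - (vM + vN) / 2%:R.
    by apply/eqP; rewrite -subr_eq0 -[X in _ == X]e hu; apply/eqP; field; nz.
  exists (- vM / t, m2), (- vN / t, m2); split => /=.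
  + by apply/eqP; rewrite hu; field; nz.
  + by apply/eqP; rewrite hu; field; nz.
  + congr (_, _); last by field; nz.
    by apply: (mulfI ht); rewrite e'; field; nz.
have e' : u * m2 = t * m1 + (vM + vN) / 2%:R.
  by apply/eqP; rewrite -subr_eq0 -oppr_eq0 -[X in _ == X]e; apply/eqP; field; nz.
exists (m1, (t * m1 + vM) / u), (m1, (t * m1 + vN) / u); split => /=.
- by apply/eqP; field; nz.
- by apply/eqP; field; nz.
- congr (_, _); first by field; nz.
  by apply: (mulfI hu); rewrite e'; field; nz.
Qed.
End Gen.

Lemma eval2M (R : comNzRingType) (P1 P2 : {poly {poly R}}) x y :
  eval2 (P1 * P2) x y = eval2 P1 x y * eval2 P2 x y.
Proof. by rewrite /eval2 !hornerM. Qed.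

Lemma eval2_lin (R : comNzRingType) (a b c x y : R) :
  eval2 (lin2 a b c) x y = a * x + b * y + c.
Proof. by rewrite /eval2 /lin2 /pC /pX /pY !hornerE. Qed.

Lemma eval_conic (K : fieldType) (Q : quad K) ab x y :
  eval2 (bisector_conic Q ab) x y =
  PhiQ Q (x - (centroid Q).1) (y - (centroid Q).2)
  - PhiQ Q (ab.1 - (centroid Q).1) (ab.2 - (centroid Q).2).
Proof.
rewrite /eval2 /bisector_conic /pC /pX /pY /PhiQ !hornerE.
by []. Qed.


Lemma map_lin2 (K : fieldType) (L : fieldType) (iota : {rmorphism K -> L}) a b c :
  map_poly (map_poly iota) (lin2 a b c) = lin2 (iota a) (iota b) (iota c).
Proof.
rewrite /lin2 /pC /pX /pY !rmorphD !rmorphM /=.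
rewrite !map_polyC !map_polyX /= !map_polyC.
by rewrite map_polyX.
Qed.

Lemma eval_map (K : fieldType) (L : fieldType) (iota : {rmorphism K -> L}) f x y :
  eval2 (map_poly (map_poly iota) f) (iota x) (iota y) = iota (eval2 f x y).
Proof.
rewrite /eval2 -horner_map /=; congr (_.[_]).
by rewrite -(map_polyC iota) horner_map.
Qed.

Lemma coef_extract (F : fieldType) (G Bt A C a1 b1 e1 a2 b2 e2 : F) :
  (2%:R : F) != 0 -> Bt ^+ 2 - A * G != 0 ->
  let P X Y := G * X ^+ 2 - 2%:R * Bt * X * Y + A * Y ^+ 2 - C in
  let R X Y := (a1 * X + b1 * Y + e1) * (a2 * X + b2 * Y + e2) in
  P 0 0 = R 0 0 -> P 1 0 = R 1 0 -> P (-1) 0 = R (-1) 0 ->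
  P 0 1 = R 0 1 -> P 0 (-1) = R 0 (-1) -> P 1 1 = R 1 1 -> C = 0.
Proof.
move=> h2 hd P R h00 h10 hm10 h01 h0m1 h11.
have P1 : a1 * e2 + a2 * e1 = 0.
  apply: (mulfI h2); rewrite mulr0.
  transitivity (R 1 0 - R (-1) 0); first by rewrite /R; ring.
  by rewrite -h10 -hm10 /P; ring.
have P2 : b1 * e2 + b2 * e1 = 0.
  apply: (mulfI h2); rewrite mulr0.
  transitivity (R 0 1 - R 0 (-1)); first by rewrite /R; ring.
  by rewrite -h01 -h0m1 /P; ring.
have Ga : G = a1 * a2.
  apply: (mulfI h2).
  transitivity (R 1 0 + R (-1) 0 - 2%:R * R 0 0 + 2%:R * C - 2%:R * C);
    last by rewrite /R; ring.
  by rewrite -h10 -hm10 -h00 /P; ring.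
have Ab : A = b1 * b2.
  apply: (mulfI h2).
  transitivity (R 0 1 + R 0 (-1) - 2%:R * R 0 0 + 2%:R * C - 2%:R * C);
    last by rewrite /R; ring.
  by rewrite -h01 -h0m1 -h00 /P; ring.
have Bm : - (2%:R * Bt) = a1 * b2 + a2 * b1.
  transitivity (R 1 1 - R 0 0 - (a1 * a2) - (b1 * b2) - (a1 * e2 + a2 * e1) - (b1 * e2 + b2 * e1));
    last by rewrite /R; ring.
  by rewrite -h11 -h00 P1 P2 -Ga -Ab /P; ring.
have hD : a1 * b2 - a2 * b1 != 0.
  apply: contra hd => /eqP hD0.
  have : 4%:R * (Bt ^+ 2 - A * G) = (a1 * b2 - a2 * b1) ^+ 2.
    transitivity ((- (2%:R * Bt)) ^+ 2 - 4%:R * (a1 * a2) * (b1 * b2)); first by rewrite -Ga -Ab; ring.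
    by rewrite Bm; ring.
  rewrite hD0 expr0n /= => /eqP; rewrite mulf_eq0 => /orP [|//].
  by rewrite (_ : 4%:R = 2%:R * 2%:R :> F) ?mulf_eq0 ?(negbTE h2) // -natrM.
have e1z : e1 = 0.
  apply: (mulfI hD); rewrite mulr0.
  transitivity (a1 * (b1 * e2 + b2 * e1) - b1 * (a1 * e2 + a2 * e1)); first by ring.
  by rewrite P1 P2; ring.
have := h00; rewrite /P /R e1z; move/eqP; rewrite -subr_eq0.
by move=> h; apply/eqP; rewrite -oppr_eq0; move: h; apply: eq_op_trans => //; apply/eqP; ring.
Qed.

Lemma deg_c (K : fieldType) (L : closedFieldType) (iota : {rmorphism K -> L})
  (Q : quad K) ab :
  (2%:R : K) != 0 -> beta Q ^+ 2 - alpha Q * gamma Q != 0 ->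
  degenerate iota (bisector_conic Q ab) ->
  PhiQ Q (ab.1 - (centroid Q).1) (ab.2 - (centroid Q).2) = 0.
Proof.
move=> h2 hd [a1 [b1 [c1 [a2 [b2 [c2 [_ _ E]]]]]]].
set h := (centroid Q).1; set k := (centroid Q).2.
set c := PhiQ Q (ab.1 - h) (ab.2 - k).
have ev : forall X Y : K,
  iota (gamma Q) * iota X ^+ 2 - 2%:R * iota (beta Q) * iota X * iota Y
  + iota (alpha Q) * iota Y ^+ 2 - iota c =
  (a1 * iota X + b1 * iota Y + (a1 * iota h + b1 * iota k + c1)) *
  (a2 * iota X + b2 * iota Y + (a2 * iota h + b2 * iota k + c2)).
  move=> X Y.
  have := eval_map iota (bisector_conic Q ab) (h + X) (k + Y).
  rewrite E eval2M !eval2_lin eval_conic -/h -/k -/c => e.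
  transitivity (iota (PhiQ Q (h + X - h) (k + Y - k) - c)).
    by rewrite /PhiQ (addrC h X) (addrC k Y) !addrK; ring.
  by rewrite -e; ring.
have h2L : (2%:R : L) != 0 by rewrite -(rmorph_nat iota) fmorph_eq0.
have hdL : iota (beta Q) ^+ 2 - iota (alpha Q) * iota (gamma Q) != 0.
  by rewrite -rmorphXn -rmorphM -rmorphB fmorph_eq0.
apply/eqP; rewrite -(fmorph_eq0 iota); apply/eqP.
have := ev 0 0; have := ev 1 0; have := ev (-1) 0; have := ev 0 1; have := ev 0 (-1);
have := ev 1 1.
rewrite ?rmorph0 ?rmorph1 ?rmorphN1 => h11 h0m1 h01 hm10 h10 h00.
exact: (coef_extract h2L hdL h00 h10 hm10 h01 h0m1 h11).
Qed.

Lemma fact_deg (K : fieldType) (L : closedFieldType) (iota : {rmorphism K -> L})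
  (Q : quad K) ab (w1 w2 : K * K) (kk : K) :
  kk != 0 -> (w1.1 != 0) || (w1.2 != 0) -> (w2.1 != 0) || (w2.2 != 0) ->
  (forall x y, PhiQ Q x y = kk * cr w1 (x, y) * cr w2 (x, y)) ->
  PhiQ Q (ab.1 - (centroid Q).1) (ab.2 - (centroid Q).2) = 0 ->
  degenerate iota (bisector_conic Q ab).
Proof.
move=> hk hw1 hw2 hP hc.
set h := (centroid Q).1; set k := (centroid Q).2.
have eg : gamma Q = kk * w1.2 * w2.2.
  transitivity (PhiQ Q 1 0); first by rewrite /PhiQ; ring.
  by rewrite hP /cr /=; ring.
have ea : alpha Q = kk * w1.1 * w2.1.
  transitivity (PhiQ Q 0 1); first by rewrite /PhiQ; ring.
  by rewrite hP /cr /=; ring.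
have eb : 2%:R * beta Q = gamma Q + alpha Q - PhiQ Q 1 1 by rewrite /PhiQ; ring.
rewrite hP /cr /= eg ea in eb.
exists (iota (kk * - w1.2)), (iota (kk * w1.1)), (iota (kk * (w1.2 * h - w1.1 * k))),
  (iota (- w2.2)), (iota w2.1), (iota (w2.2 * h - w2.1 * k)); split.
- rewrite !fmorph_eq0 !mulf_eq0 (negbTE hk) /= oppr_eq0.
  by case/orP: hw1 => ->; [right|left].
- rewrite !fmorph_eq0 oppr_eq0.
  by case/orP: hw2 => ->; [right|left].
rewrite -!map_lin2 -rmorphM; congr (map_poly _ _).
rewrite /bisector_conic -/h -/k hc eb eg ea /lin2 /pC /pX /pY.
ring.
Qed.

Lemma GPar (K : fieldType) (Q : quad K) (M N : line K) (m1 m2 : point K) :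
  (2%:R : K) != 0 -> beta Q ^+ 2 - alpha Q * gamma Q != 0 ->
  normalized M -> normalized N -> parallel M N -> M <> N ->
  on_line M m1 -> on_line N m2 -> centroid Q = midpoint m1 m2 ->
  PhiQ Q (lu M) (lt M) = 0 -> PhiQ Q (m2.1 - m1.1) (m2.2 - m1.2) = 0 ->
  (exists kk w1 w2, [/\ kk != 0, (w1.1 != 0) || (w1.2 != 0), (w2.1 != 0) || (w2.2 != 0)
     & forall x y, PhiQ Q x y = kk * cr w1 (x, y) * cr w2 (x, y)]) /\
  (forall p : point K, PhiQ Q (p.1 - (centroid Q).1) (p.2 - (centroid Q).2) = 0 <->
     midline M N p \/ on_line (line_thru m1 m2) p).
Proof.
move=> h2 hd nM nN pMN MN oM oN ecen P1 P2; rewrite ecen.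
have [et eu] := norm_par nM nN pMN.
have mid := midline_iff _ h2 nM nN pMN.
have nzM := norm_nz nM.
move: P1 et eu oM oN MN mid nzM.
clear nM nN pMN.
case: M => t u vM; case: N => tN uN vN /= P1 <- <- oM oN MN mid nzM.
have hv : vN - vM != 0.
  rewrite subr_eq0; apply/eqP => e; apply: MN; by rewrite e.
move: oM oN; rewrite /on_line /= => /eqP oM /eqP oN.
set w1 := (u, t); set w2 := (m2.1 - m1.1, m2.2 - m1.2).
have hc : cr w1 w2 != 0.
  have -> : cr w1 w2 = vN - vM.
    transitivity ((t * m1.1 - u * m1.2 + vM) - (t * m2.1 - u * m2.2 + vN) + (vN - vM));
      first by rewrite /cr /=; ring.
    by rewrite oM oN; ring.
  exact: hv.
have [kk [hk hP]] := @GL _ _ _ _ w1 w2 h2 hd P1 P2 hc.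
have hw2 : (w2.1 != 0) || (w2.2 != 0).
  apply: contraLR hc; rewrite negb_or !negbK => /andP [/eqP e1 /eqP e2].
  by rewrite /cr e1 e2 !mulr0 subrr.
split.
  exists kk, w1, w2; split => //.
  by rewrite /w1 /= orbC.
have m12 : m1 != m2.
  by apply/eqP => e; move: hw2; rewrite /w2 e !subrr eqxx.
move=> p.
change (Phi3 (gamma Q) (beta Q) (alpha Q) (p.1 - (midpoint m1 m2).1) (p.2 - (midpoint m1 m2).2) = 0 <-> midline (Line t u vM) (Line t u vN) p \/ on_line (line_thru m1 m2) p).
rewrite hP mid on_thru //.
have c1 : cr w1 (p.1 - (midpoint m1 m2).1, p.2 - (midpoint m1 m2).2) =
   - (t * p.1 - u * p.2 + (vM + vN) / 2%:R).
  transitivity (- (t * p.1 - u * p.2 + (vM + vN) / 2%:R)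
    + (t * m1.1 - u * m1.2 + vM) / 2%:R + (t * m2.1 - u * m2.2 + vN) / 2%:R).
    by rewrite /cr /midpoint /=; field.
  by rewrite oM oN; field.
have c2 : cr w2 (p.1 - (midpoint m1 m2).1, p.2 - (midpoint m1 m2).2) =
   (m2.1 - m1.1) * (p.2 - m1.2) - (m2.2 - m1.2) * (p.1 - m1.1).
  by rewrite /cr /midpoint /=; field.
rewrite c1 c2; split.
  move/eqP; rewrite !mulf_eq0 (negbTE hk) /= oppr_eq0 => /orP [/eqP ->|->]; by [left|right].
case=> [->|/eqP ->]; by rewrite ?oppr0 !(mulr0, mul0r).
Qed.

Lemma disc_id (K : fieldType) (tA uA vA tB uB vB tC uC vC tD uD vD : K) :
  let Q := Quad (Line tA uA vA) (Line tB uB vB) (Line tC uC vC) (Line tD uD vD) in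
  beta Q ^+ 2 - alpha Q * gamma Q =
  (uA*tB - tA*uB) * (uB*tC - tB*uC) * (uC*tD - tC*uD) * (uD*tA - tD*uA).
Proof. rewrite /=. ring. Qed.

Lemma on_mid (K : fieldType) (L : line K) p q : (2%:R : K) != 0 ->
  on_line L p -> on_line L q -> on_line L (midpoint p q).
Proof.
move=> h2; rewrite /on_line /midpoint /= => /eqP e1 /eqP e2; apply/eqP.
transitivity ((lt L * p.1 - lu L * p.2 + lv L + (lt L * q.1 - lu L * q.2 + lv L)) / 2%:R).
  by field.
by rewrite e1 e2 addr0 mul0r.
Qed.

Lemma PhiQ_scale (K : fieldType) (Q : quad K) s x y :
  PhiQ Q (s * x) (s * y) = s ^+ 2 * PhiQ Q x y.
Proof. rewrite /PhiQ; ring. Qed.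

Lemma on_lineE (K : fieldType) (t u v : K) p :
  on_line (Line t u v) p = (t * p.1 - u * p.2 + v == 0).
Proof. by []. Qed.

Lemma parallelE (K : fieldType) (t u v t' u' v' : K) :
  parallel (Line t u v) (Line t' u' v') = (t * u' == u * t').
Proof. by []. Qed.

Lemma thru_on1 (K : fieldType) (p q : point K) : p != q -> on_line (line_thru p q) p.
Proof. by move=> h; rewrite on_thru // !subrr !mulr0 subrr. Qed.

Lemma thru_on2 (K : fieldType) (p q : point K) : p != q -> on_line (line_thru p q) q.
Proof. by move=> h; rewrite on_thru //; apply/eqP; ring. Qed.

Lemma c_diag2 (K : fieldType) (tA uA tB uB tC uC tD uD x1 y1 x3 y3 : K) :
  (2%:R : K) != 0 ->
  uA*tB - tA*uB != 0 -> uB*tC - tB*uC != 0 -> uC*tD - tC*uD != 0 -> uD*tA - tD*uA != 0 ->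
  let A := Line tA uA (uA*y1 - tA*x1) in let B := Line tB uB (uB*y1 - tB*x1) in
  let C := Line tC uC (uC*y3 - tC*x3) in let D := Line tD uD (uD*y3 - tD*x3) in
  let Q := Quad A B C D in
  let V1 := (x1, y1) in let V2 := meet B C in let V3 := (x3, y3) in let V4 := meet D A in
  let Dl := (V3.1-V1.1)*(V4.2-V2.2) - (V3.2-V1.2)*(V4.1-V2.1) in
  let Ld1 := Line (V3.2-V1.2) (V3.1-V1.1) ((V3.1-V1.1)*V1.2 - (V3.2-V1.2)*V1.1) in
  let Ld2 := Line (V4.2-V2.2) (V4.1-V2.1) ((V4.1-V2.1)*V2.2 - (V4.2-V2.2)*V2.1) in
  Dl != 0 ->
  PhiQ Q ((meet Ld1 Ld2).1 - (midpoint (midpoint V1 V3) (midpoint V2 V4)).1)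
         ((meet Ld1 Ld2).2 - (midpoint (midpoint V1 V3) (midpoint V2 V4)).2) =
  (tA*uC - uA*tC) * (tB*uD - uB*tD) * Dl / 16%:R.
Proof.
move=> h2 hD1 hD2 hD3 hD4 A B C D Q V1 V2 V3 V4 Dl Ld1 Ld2 hDl.
have h16 : (16%:R : K) != 0.
  by rewrite (_ : 16 = 2 * 2 * 2 * 2)%N // !natrM !mulf_neq0.
move: hDl.
rewrite /Ld1 /Ld2 /Dl /V1 /V2 /V3 /V4 /Q /A /B /C /D /midpoint /meet /PhiQ /= => h6.
field; nz.
apply: contra h6 => /eqP hN; apply/eqP.
rewrite -[RHS](mul0r ((uD*tA - tD*uA)*(uB*tC-tB*uC))^-1) -hN.
by field; nz.
Qed.

Section Ids.
Variable K : fieldType.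
Variables tA uA vA tB uB vB tC uC vC tD uD vD : K.
Hypothesis h2 : (2%:R : K) != 0.
Hypothesis hD1 : uA*tB - tA*uB != 0.
Hypothesis hD2 : uB*tC - tB*uC != 0.
Hypothesis hD3 : uC*tD - tC*uD != 0.
Hypothesis hD4 : uD*tA - tD*uA != 0.
Let A := Line tA uA vA.
Let B := Line tB uB vB.
Let C := Line tC uC vC.
Let D := Line tD uD vD.
Let Q := Quad A B C D.
Let V1 := meet A B.
Let V2 := meet B C.
Let V3 := meet C D.
Let V4 := meet D A.
Let Dl := (V3.1-V1.1)*(V4.2-V2.2) - (V3.2-V1.2)*(V4.1-V2.1).

Lemma h16 : (16%:R : K) != 0.
Proof.
by rewrite (_ : 16 = 2 * 2 * 2 * 2)%N // !natrM !mulf_neq0.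
Qed.

Lemma c_AC : uA*tC - tA*uC != 0 ->
  PhiQ Q ((meet A C).1 - (centroid Q).1) ((meet A C).2 - (centroid Q).2) =
  (tA*uC - uA*tC) * (tB*uD - uB*tD) * Dl / 16%:R.
Proof. have _ := (h2, hD1, hD2, hD3, hD4).
move=> h6; have := h16.
rewrite /Dl /V1 /V2 /V3 /V4 /Q /A /B /C /D /centroid /middiag1 /middiag2 /midpoint /vAB /vBA' /vA'B' /vB'A /meet /PhiQ /= => h16.
by field; nz.
Qed.

Lemma c_BD : uB*tD - tB*uD != 0 ->
  PhiQ Q ((meet B D).1 - (centroid Q).1) ((meet B D).2 - (centroid Q).2) =
  (tA*uC - uA*tC) * (tB*uD - uB*tD) * Dl / 16%:R.
Proof. have _ := (h2, hD1, hD2, hD3, hD4).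
move=> h6; have := h16.
rewrite /Dl /V1 /V2 /V3 /V4 /Q /A /B /C /D /centroid /middiag1 /middiag2 /midpoint /vAB /vBA' /vA'B' /vB'A /meet /PhiQ /= => h16.
by field; nz.
Qed.

Let Ld1 := Line (V3.2-V1.2) (V3.1-V1.1) ((V3.1-V1.1)*V1.2 - (V3.2-V1.2)*V1.1).
Let Ld2 := Line (V4.2-V2.2) (V4.1-V2.1) ((V4.1-V2.1)*V2.2 - (V4.2-V2.2)*V2.1).



Ltac unf := rewrite /Dl /V1 /V2 /V3 /V4 /Q /A /B /C /D /centroid /middiag1 /middiag2 /midpoint /vAB /vBA' /vA'B' /vB'A /meet /PhiQ /=.

Lemma phi_f1 : PhiQ Q (V3.1-V1.1) (V3.2-V1.2) = - (uB*tC - tB*uC)*(uD*tA - tD*uA) * Dl.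
Proof. have _ := (h2, hD1, hD2, hD3, hD4). unf; by field; nz. Qed.

Lemma phi_E2 : PhiQ Q (V2.1+V4.1-V1.1-V3.1) (V2.2+V4.2-V1.2-V3.2) =
  (tA*uC - uA*tC) * (tB*uD - uB*tD) * Dl.
Proof. have _ := (h2, hD1, hD2, hD3, hD4). unf; by field; nz. Qed.

Definition onv (L : line K) (p : point K) := lt L * p.1 - lu L * p.2 + lv L.

Lemma a123 : ((V3.1-V1.1)*(V2.2-V1.2) - (V3.2-V1.2)*(V2.1-V1.1)) * (uC*tD - tC*uD)
  = - onv C V1 * onv D V2.
Proof. have _ := (h2, hD1, hD2, hD3, hD4). rewrite /onv; unf; by field; nz. Qed.

Lemma a134 : ((V3.1-V1.1)*(V4.2-V1.2) - (V3.2-V1.2)*(V4.1-V1.1)) * (uA*tB - tA*uB)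
  = onv A V3 * onv B V4.
Proof. have _ := (h2, hD1, hD2, hD3, hD4). rewrite /onv; unf; by field; nz. Qed.

Lemma phi_A : tC = tA -> uC = uA ->
  PhiQ Q uA tA = 0 /\
  PhiQ Q ((midpoint V2 V3).1 - (midpoint V1 V4).1) ((midpoint V2 V3).2 - (midpoint V1 V4).2) = 0.
Proof. have _ := (h2, hD1, hD2, hD3, hD4).
move=> et eu; split; first by rewrite /PhiQ /Q /A /C /= et eu; ring.
move: hD2 hD3; unf; rewrite et eu => hD2' hD3'.
by field; nz.
Qed.

Lemma phi_B : tD = tB -> uD = uB ->
  PhiQ Q uB tB = 0 /\
  PhiQ Q ((midpoint V3 V4).1 - (midpoint V1 V2).1) ((midpoint V3 V4).2 - (midpoint V1 V2).2) = 0.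
Proof. have _ := (h2, hD1, hD2, hD3, hD4).
move=> et eu; split; first by rewrite /PhiQ /Q /B /D /= et eu; ring.
move: hD3 hD4; unf; rewrite et eu => hD3' hD4'.
by field; nz.
Qed.

Lemma cen_A : centroid Q = midpoint (midpoint V1 V4) (midpoint V2 V3).
Proof. have _ := (h2, hD1, hD2, hD3, hD4). unf; congr (_, _); by field; nz. Qed.

Lemma cen_B : centroid Q = midpoint (midpoint V1 V2) (midpoint V3 V4).
Proof. have _ := (h2, hD1, hD2, hD3, hD4). unf; congr (_, _); by field; nz. Qed.
End Ids.

Unset Implicit Arguments.

Theorem theorem5p2 (K : fieldType) (L : closedFieldType)
  (iota : {rmorphism K -> L}) (Q : quad K) (ab : point K) :
  (2%:R : K) != 0 ->
  is_alg_closure iota ->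
  is_quadrilateral Q ->
  finite_diag_point Q ab ->
  (degenerate iota (bisector_conic Q ab) <->
     [\/ parallel (qA Q) (qA' Q), parallel (qB Q) (qB' Q)
       | parallel (diag1 Q) (diag2 Q)])
  /\ (parallel (qA Q) (qA' Q) -> forall p : point K,
        bisector_locus Q ab p <->
        midline (qA Q) (qA' Q) p \/ on_line (line_thru (midA Q) (midA' Q)) p)
  /\ (parallel (qB Q) (qB' Q) -> forall p : point K,
        bisector_locus Q ab p <->
        midline (qB Q) (qB' Q) p \/ on_line (line_thru (midB Q) (midB' Q)) p)
  /\ (parallel (diag1 Q) (diag2 Q) -> forall p : point K,
        bisector_locus Q ab p <->
        midline (diag1 Q) (diag2 Q) p
        \/ on_line (line_thru (middiag1 Q) (middiag2 Q)) p).
Proof.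
move=> h2 _ hQ hab.
case: Q hQ hab => A B C D.
case: A => tA uA vA; case: B => tB uB vB; case: C => tC uC vC; case: D => tD uD vD.
set A := Line tA uA vA; set B := Line tB uB vB; set C := Line tC uC vC; set D := Line tD uD vD.
set Q := Quad A B C D.
move=> [/and4P [nA nB nC nD] [dAB dAC dAD [dBC dBD dCD]] nconc /and4P [pAB pBC pCD pDA]] hab.
have hD1 : uA*tB - tA*uB != 0 := npar_nz pAB.
have hD2 : uB*tC - tB*uC != 0 := npar_nz pBC.
have hD3 : uC*tD - tC*uD != 0 := npar_nz pCD.
have hD4 : uD*tA - tD*uA != 0 := npar_nz pDA.
have hdisc : beta Q ^+ 2 - alpha Q * gamma Q != 0.
  by rewrite disc_id !mulf_neq0.
set V1 := meet A B; set V2 := meet B C; set V3 := meet C D; set V4 := meet D A.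
have [oAV1 oBV1] : on_line A V1 /\ on_line B V1 := meet_on pAB.
have [oBV2 oCV2] : on_line B V2 /\ on_line C V2 := meet_on pBC.
have [oCV3 oDV3] : on_line C V3 /\ on_line D V3 := meet_on pCD.
have [oDV4 oAV4] : on_line D V4 /\ on_line A V4 := meet_on pDA.
have V13 : V1 != V3.
  apply/eqP => e; apply: nconc; exists V1; by rewrite oAV1 oBV1 e oCV3 oDV3.
have V24 : V2 != V4.
  apply/eqP => e; apply: nconc; exists V2; by rewrite oBV2 oCV2 e oDV4 oAV4.
set Dl := (V3.1-V1.1)*(V4.2-V2.2) - (V3.2-V1.2)*(V4.1-V2.1).
have ed1 : diag1 Q = line_thru V1 V3 by [].
have ed2 : diag2 Q = line_thru V2 V4 by [].
have [s1 [hs1 [et1 eu1 ev1]]] := thru_coef V13.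
have [s2 [hs2 [et2 eu2 ev2]]] := thru_coef V24.
have hpd : parallel (diag1 Q) (diag2 Q) = (Dl == 0).
  rewrite /parallel ed1 ed2 et1 eu1 et2 eu2 -subr_eq0.
  have -> : s1 * (V3.2 - V1.2) * (s2 * (V4.1 - V2.1)) - s1 * (V3.1 - V1.1) * (s2 * (V4.2 - V2.2))
    = - (s1 * s2) * Dl by rewrite /Dl; ring.
  by rewrite mulf_eq0 oppr_eq0 mulf_eq0 (negbTE hs1) (negbTE hs2).
have hpA : parallel A C = (tA*uC - uA*tC == 0) by rewrite /parallel subr_eq0.
have hpB : parallel B D = (tB*uD - uB*tD == 0) by rewrite /parallel subr_eq0.
set c := PhiQ Q (ab.1 - (centroid Q).1) (ab.2 - (centroid Q).2).
have Hc : c = (tA*uC - uA*tC) * (tB*uD - uB*tD) * Dl / 16%:R.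
  case: hab => [/and3P [pAC oA oC]|/and3P [pBD oB oD]|/and3P [pd od1 od2]].
  - rewrite /c (meet_uniq pAC oA oC).
    exact: (@c_AC K tA uA vA tB uB vB tC uC vC tD uD vD h2 hD1 hD2 hD3 hD4 (npar_nz pAC)).
  - rewrite /c (meet_uniq pBD oB oD).
    exact: (@c_BD K tA uA vA tB uB vB tC uC vC tD uD vD h2 hD1 hD2 hD3 hD4 (npar_nz pBD)).
  - rewrite ed1 on_thru // in od1; rewrite ed2 on_thru // in od2; rewrite hpd in pd.
    set Ld1 := Line (V3.2-V1.2) (V3.1-V1.1) ((V3.1-V1.1)*V1.2 - (V3.2-V1.2)*V1.1).
    set Ld2 := Line (V4.2-V2.2) (V4.1-V2.1) ((V4.1-V2.1)*V2.2 - (V4.2-V2.2)*V2.1).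
    have oL1 : on_line Ld1 ab.
      move/eqP: od1 => e; rewrite /Ld1 on_lineE; apply/eqP.
      transitivity (- ((V3.1 - V1.1) * (ab.2 - V1.2) - (V3.2 - V1.2) * (ab.1 - V1.1))).
        by ring.
      by rewrite e oppr0.
    have oL2 : on_line Ld2 ab.
      move/eqP: od2 => e; rewrite /Ld2 on_lineE; apply/eqP.
      transitivity (- ((V4.1 - V2.1) * (ab.2 - V2.2) - (V4.2 - V2.2) * (ab.1 - V2.1))).
        by ring.
      by rewrite e oppr0.
    have npL : ~~ parallel Ld1 Ld2.
      rewrite /Ld1 /Ld2 parallelE -subr_eq0.
      rewrite (_ : _ - _ = - Dl) ?oppr_eq0 //; rewrite /Dl; ring.
    rewrite /c (meet_uniq npL oL1 oL2).
    have eA : uA * V1.2 - tA * V1.1 = vA.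
      transitivity (vA - (tA*V1.1 - uA*V1.2 + vA)); first by ring.
      by rewrite (eqP oAV1) subr0.
    have eB : uB * V1.2 - tB * V1.1 = vB.
      transitivity (vB - (tB*V1.1 - uB*V1.2 + vB)); first by ring.
      by rewrite (eqP oBV1) subr0.
    have eC : uC * V3.2 - tC * V3.1 = vC.
      transitivity (vC - (tC*V3.1 - uC*V3.2 + vC)); first by ring.
      by rewrite (eqP oCV3) subr0.
    have eD : uD * V3.2 - tD * V3.1 = vD.
      transitivity (vD - (tD*V3.1 - uD*V3.2 + vD)); first by ring.
      by rewrite (eqP oDV3) subr0.
    have key := @c_diag2 K tA uA tB uB tC uC tD uD V1.1 V1.2 V3.1 V3.2 h2 hD1 hD2 hD3 hD4.
    cbv zeta in key; rewrite eA eB eC eD -!surjective_pairing in key.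
    exact: key pd.
have h16 : (16%:R : K) != 0 := @h16 K h2.
have Hc0 : c = 0 <-> [\/ parallel A C, parallel B D | parallel (diag1 Q) (diag2 Q)].
  rewrite hpA hpB hpd Hc; split.
  - move/eqP; rewrite mulf_eq0 invr_eq0 (negbTE h16) orbF !mulf_eq0.
    by case/orP => [/orP [h|h]|h]; [constructor 1|constructor 2|constructor 3].
  - by case=> /eqP ->; rewrite ?(mul0r, mulr0).
set cen := centroid Q.
have GA : parallel A C ->
  (exists kk w1 w2, [/\ kk != 0, (w1.1 != 0) || (w1.2 != 0), (w2.1 != 0) || (w2.2 != 0)
     & forall x y, PhiQ Q x y = kk * cr w1 (x, y) * cr w2 (x, y)]) /\
  (forall p : point K, PhiQ Q (p.1 - cen.1) (p.2 - cen.2) = 0 <->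
     midline A C p \/ on_line (line_thru (midA Q) (midA' Q)) p).
  move=> pAC; have [et eu] := norm_par nA nC pAC.
  have [P1 P2] := @phi_A K tA uA vA tB uB vB tC uC vC tD uD vD h2 hD1 hD2 hD3 hD4 (esym et) (esym eu).
  apply: (GPar h2 hdisc nA nC pAC dAC _ _ _ P1 P2).
  - exact: on_mid h2 oAV1 oAV4.
  - exact: on_mid h2 oCV2 oCV3.
  - exact: (@cen_A K tA uA vA tB uB vB tC uC vC tD uD vD h2 hD1 hD2 hD3 hD4).
have GB : parallel B D ->
  (exists kk w1 w2, [/\ kk != 0, (w1.1 != 0) || (w1.2 != 0), (w2.1 != 0) || (w2.2 != 0)
     & forall x y, PhiQ Q x y = kk * cr w1 (x, y) * cr w2 (x, y)]) /\
  (forall p : point K, PhiQ Q (p.1 - cen.1) (p.2 - cen.2) = 0 <->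
     midline B D p \/ on_line (line_thru (midB Q) (midB' Q)) p).
  move=> pBD; have [et eu] := norm_par nB nD pBD.
  have [P1 P2] := @phi_B K tA uA vA tB uB vB tC uC vC tD uD vD h2 hD1 hD2 hD3 hD4 (esym et) (esym eu).
  apply: (GPar h2 hdisc nB nD pBD dBD _ _ _ P1 P2).
  - exact: on_mid h2 oBV1 oBV2.
  - exact: on_mid h2 oDV3 oDV4.
  - exact: (@cen_B K tA uA vA tB uB vB tC uC vC tD uD vD h2 hD1 hD2 hD3 hD4).
have GD : parallel (diag1 Q) (diag2 Q) ->
  (exists kk w1 w2, [/\ kk != 0, (w1.1 != 0) || (w1.2 != 0), (w2.1 != 0) || (w2.2 != 0)
     & forall x y, PhiQ Q x y = kk * cr w1 (x, y) * cr w2 (x, y)]) /\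
  (forall p : point K, PhiQ Q (p.1 - cen.1) (p.2 - cen.2) = 0 <->
     midline (diag1 Q) (diag2 Q) p \/ on_line (line_thru (middiag1 Q) (middiag2 Q)) p).
  move=> pd; have Dl0 : Dl = 0 by apply/eqP; rewrite -hpd.
  have P1 : PhiQ Q (lu (diag1 Q)) (lt (diag1 Q)) = 0.
    rewrite ed1 eu1 et1 PhiQ_scale.
    rewrite (@phi_f1 K tA uA vA tB uB vB tC uC vC tD uD vD h2 hD1 hD2 hD3 hD4).
    by rewrite -/Dl Dl0 !mulr0.
  have P2 : PhiQ Q ((middiag2 Q).1 - (middiag1 Q).1) ((middiag2 Q).2 - (middiag1 Q).2) = 0.
    rewrite /middiag1 /middiag2 /midpoint.
    rewrite (_ : vBA' Q = V2) // (_ : (vB'A Q) = V4) // (_ : vAB Q = V1) // (_ : vA'B' Q = V3) //.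
    rewrite (_ : (V2.1 + V4.1) / 2%:R - (V1.1 + V3.1) / 2%:R = 2%:R^-1 * (V2.1+V4.1-V1.1-V3.1));
      last by field.
    rewrite (_ : (V2.2 + V4.2) / 2%:R - (V1.2 + V3.2) / 2%:R = 2%:R^-1 * (V2.2+V4.2-V1.2-V3.2));
      last by field.
    rewrite PhiQ_scale (@phi_E2 K tA uA vA tB uB vB tC uC vC tD uD vD h2 hD1 hD2 hD3 hD4).
    by rewrite -/Dl Dl0 !mulr0.
  apply: (GPar h2 hdisc (thru_norm _ _) (thru_norm _ _) pd _ _ _ _ P1 P2) => //.
  - move=> e.
    have oV2 : on_line (line_thru V1 V3) V2.
      by rewrite (_ : line_thru V1 V3 = line_thru V2 V4) ?thru_on1 //; exact: e.
    rewrite on_thru // in oV2.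
    have e123 := @a123 K tA uA vA tB uB vB tC uC vC tD uD vD h2 hD1 hD2 hD3 hD4.
    have e134 := @a134 K tA uA vA tB uB vB tC uC vC tD uD vD h2 hD1 hD2 hD3 hD4.
    rewrite (eqP oV2) mul0r in e123.
    have z134 : (V3.1-V1.1)*(V4.2-V1.2) - (V3.2-V1.2)*(V4.1-V1.1) = 0.
      transitivity (Dl + ((V3.1-V1.1)*(V2.2-V1.2) - (V3.2-V1.2)*(V2.1-V1.1))).
        by rewrite /Dl; ring.
      by rewrite Dl0 (eqP oV2) addr0.
    rewrite z134 mul0r in e134.
    move: e123 => /esym/eqP; rewrite mulf_eq0 oppr_eq0 => h123.
    move: e134 => /esym/eqP; rewrite mulf_eq0 => h134.
    case/orP: h123 => [h1|h1]; case/orP: h134 => [h3|h3].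
    + have oCV1 : on_line C V1 := h1; have oAV3 : on_line A V3 := h3.
      have [pAC|npAC] := boolP (parallel A C).
        by apply: dAC; apply: (par_eq nA nC pAC oAV1 oCV1).
      have e1 := meet_uniq npAC oAV1 oCV1; have e3 := meet_uniq npAC oAV3 oCV3.
      apply: nconc; exists V1; by rewrite oAV1 oBV1 oCV1 e1 -e3 oDV3.
    + have oCV1 : on_line C V1 := h1; have oBV4 : on_line B V4 := h3.
      have e4 := meet_uniq pAB oAV4 oBV4.
      apply: nconc; exists V1; by rewrite oAV1 oBV1 oCV1 (esym e4 : V1 = V4) oDV4.
    + have oDV2 : on_line D V2 := h1; have oAV3 : on_line A V3 := h3.
      have e2 := meet_uniq pCD oCV2 oDV2.
      apply: nconc; exists V3; by rewrite oAV3 oCV3 oDV3 (esym e2 : V3 = V2) oBV2.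
    + have oDV2 : on_line D V2 := h1; have oBV4 : on_line B V4 := h3.
      have [pBD|npBD] := boolP (parallel B D).
        by apply: dBD; apply: (par_eq nB nD pBD oBV2 oDV2).
      have e2 := meet_uniq npBD oBV2 oDV2; have e4 := meet_uniq npBD oBV4 oDV4.
      apply: nconc; exists V2; by rewrite oBV2 oCV2 oDV2 e2 -e4 oAV4.
  - exact: on_mid h2 (thru_on1 V13) (thru_on2 V13).
  - exact: on_mid h2 (thru_on1 V24) (thru_on2 V24).
have Lc : forall p, c = 0 ->
    (bisector_locus Q ab p <-> PhiQ Q (p.1 - cen.1) (p.2 - cen.2) = 0).
  move=> p c0; rewrite /bisector_locus eval_conic -/cen -/c c0 subr0; by [].
split.
  split.
    by move=> hdeg; apply/Hc0; exact: deg_c h2 hdisc hdeg.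
  move=> H; have c0 : c = 0 by apply/Hc0.
  have [[kk [w1 [w2 [hk hw1 hw2 hP]]]] _] :
    (exists kk w1 w2, [/\ kk != 0, (w1.1 != 0) || (w1.2 != 0), (w2.1 != 0) || (w2.2 != 0)
     & forall x y, PhiQ Q x y = kk * cr w1 (x, y) * cr w2 (x, y)]) /\ True.
    by case: H => [/GA|/GB|/GD] [H1 _].
  exact: fact_deg hk hw1 hw2 hP c0.
split.
  move=> pAC p; have c0 : c = 0 by apply/Hc0; constructor 1.
  by rewrite (Lc p c0); exact: (GA pAC).2 p.
split.
  move=> pBD p; have c0 : c = 0 by apply/Hc0; constructor 2.
  by rewrite (Lc p c0); exact: (GB pBD).2 p.
move=> pd p; have c0 : c = 0 by apply/Hc0; constructor 3.
by rewrite (Lc p c0); exact: (GD pd).2 p.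
Qed.
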